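(* In the setting of a sequential changepoint problem with observations $X_1,X_2,\ldots$ independent, $X_t\sim P_{\theta_0}$ for $t\le T$ and $X_t\sim P_{\theta_1}$ for $t>T$, where $\theta_0\ne\theta_1\in\Theta$, $(\Theta,d)$ a metric space, suppose that $T<\infty$ and the pre-change parameter $\theta_0$ is known, and let $\tau$ be the stopping time of the BCS-Detector built from level-$(1-\alpha)$ confidence sequences with pointwise width $w(\cdot,\theta,\alpha)$. Then $$\mathbb{E}_T[(\tau-T)^+]\le\frac{3}{1-\alpha}\,t_0(\theta_0,\theta_1),$$ where $t_0(\theta_0,\theta_1):=\min\{t\ge1:\ w(t,\theta_1,\alpha)<d(\theta_1,\theta_0)\}$.
   Context: $\mathbb{E}_T$ denotes expectation when the change occurs at time $T$. A level-$(1-\alpha)$ confidence sequence is a sequence of sets $C_t\subset\Theta$, $C_t$ being $\sigma(X_1,\ldots,X_t)$-measurable, with $\mathbb{P}(\forall t:\theta\in C_t)\ge1-\alpha$ under i.i.d. data from $P_\theta$. For each $n\ge1$ a backward confidence sequence $\{B^{(n)}_t\}_{t\in[n]}$ is obtained by applying the same construction to the reversed data $X_n,X_{n-1},\ldots,X_1$ and re-indexing, so that $B^{(n)}_t$ is $\sigma(X_t,\ldots,X_n)$-measurable, with $\mathbb{P}(\forall t\in[n]:\theta\in B^{(n)}_t)\ge1-\alpha$ under i.i.d. data from $P_\theta$; all CSs are nested ($C_t\subset C_s$ and $B^{(n)}_s\subset B^{(n)}_t$ for $s<t$). Knowledge of $\theta_0$ means the forward sets contain $\theta_0$ for all $t<T$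 with probability one (e.g. $C_t=\{\theta_0\}$). The BCS-Detector stops at $\tau=\inf\{n\ge1: C_n\cap B^{(n)}_1=\emptyset\}$. A function $w(t,\theta,\alpha)$ is a pointwise width if the confidence set built from $t$ i.i.d. observations from $P_\theta$ satisfies $\sup_{\theta'\in C_t}d(\theta,\theta')\le w(t,\theta,\alpha)$. *)

(* Defs.v *)
From HB Require Import structures.
From mathcomp Require Import all_boot all_order all_algebra.
From mathcomp Require Import all_classical all_reals all_analysis.
Set Implicit Arguments. Unset Strict Implicit. Unset Printing Implicit Defensive.
Import Order.TTheory GRing.Theory Num.Theory.
Import numFieldNormedType.Exports.
Local Open Scope classical_set_scope.
Local Open Scope ring_scope.

Section Defs.
Context {R : realType}.

Definition is_metric (Theta : Type) (d : Theta -> Theta -> R) : Prop :=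
  [/\ forall x y, 0 <= d x y,
      forall x y, d x y = 0 <-> x = y,
      forall x y, d x y = d y x &
      forall x y z, d x z <= d x y + d y z].

Context {dX : measure_display} {X : measurableType dX}.

(* Observations are indexed from 0: Y i is the (i+1)-th observation X_{i+1}. *)
Definition obs_prefix {dO} {Omega : measurableType dO}
  (Y : nat -> Omega -> X) (n : nat) (w : Omega) : seq X :=
  [seq Y i w | i <- iota 0 n].

Definition mutually_independent {dO} {Omega : measurableType dO}
  (P : probability Omega R) (Y : nat -> Omega -> X) : Prop :=
  forall I : seq nat, uniq I ->
  forall A : nat -> set X, (forall i, measurable (A i)) ->
  P (\bigcap_(i in [set` I]) (Y i @^-1` A i)) =
  (\prod_(i <- I) P (Y i @^-1` A i))%E.

Definition iid_with_law {dO} {Omega : measurableType dO}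
  (P : probability Omega R) (Y : nat -> Omega -> X) (Q : probability X R) : Prop :=
  [/\ forall i, measurable_fun [set: Omega] (Y i),
      mutually_independent P Y &
      forall i A, measurable A -> P (Y i @^-1` A) = Q A].

(* A confidence-set construction: CS xs is the confidence set computed from
   the data xs = [x_1; ...; x_t] (in this order).  Forward CS: C_t =
   CS [X_1;...;X_t]; backward CS: B^(n)_t = CS [X_n; X_{n-1}; ...; X_t]. *)

Definition CS_measurable (Theta : Type) (d : Theta -> Theta -> R)
  (CS : seq X -> set Theta) : Prop :=
  forall (n : nat) (th : Theta),
    measurable [set x : n.-tuple X | CS (tval x) th] /\
    forall r : R, measurable [set x : n.-tuple X |
                              forall th', CS (tval x) th' -> d th th' <= r].

Definition CS_nested (Theta : Type) (CS : seq X -> set Theta) : Prop :=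
  forall xs ys, CS (xs ++ ys) `<=` CS xs.

Definition CS_level (Theta : Type) (Pth : Theta -> probability X R)
  (CS : seq X -> set Theta) (alpha : R) : Prop :=
  forall (th : Theta) (dO : measure_display) (Omega : measurableType dO)
         (Q : probability Omega R) (Y : nat -> Omega -> X),
    iid_with_law Q Y (Pth th) ->
    ((1 - alpha)%:E <= Q [set w | forall t, CS (obs_prefix Y t.+1 w) th])%E.

Definition pointwise_width (Theta : Type) (d : Theta -> Theta -> R)
  (Pth : Theta -> probability X R) (CS : seq X -> set Theta)
  (wd : nat -> Theta -> R -> R) (alpha : R) : Prop :=
  forall (th : Theta) (t : nat), (1 <= t)%N ->
  forall (dO : measure_display) (Omega : measurableType dO)
         (Q : probability Omega R) (Y : nat -> Omega -> X),
    iid_with_law Q Y (Pth th) ->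
    ((1 - alpha)%:E <= Q [set w | forall th', CS (obs_prefix Y t w) th' ->
                                   (d th th' <= wd t th alpha)%R])%E.

(* t_0(theta0, theta1) = min {t >= 1 : w(t, theta1, alpha) < d(theta1, theta0)}
   (= +oo if the set is empty) *)
Definition t0 (Theta : Type) (d : Theta -> Theta -> R)
  (wd : nat -> Theta -> R -> R) (alpha : R) (th0 th1 : Theta) : \bar R :=
  ereal_inf [set (t%:R)%:E | t in [set t : nat |
               (1 <= t)%N /\ wd t th1 alpha < d th1 th0]].

(* BCS-Detector with known pre-change parameter (C_n = {theta0}):
   tau = inf {n >= 1 : C_n `&` B^(n)_1 = set0}, B^(n)_1 = CS [X_n;...;X_1]. *)
Definition bcs_tau (Theta : Type) (CS : seq X -> set Theta) (th0 : Theta)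
  {dO} {Omega : measurableType dO} (Y : nat -> Omega -> X) (w : Omega) : \bar R :=
  ereal_inf [set (n%:R)%:E | n in [set n : nat | (1 <= n)%N /\
     [set th0] `&` CS (rev (obs_prefix Y n w)) = set0]].

Definition delay (Theta : Type) (CS : seq X -> set Theta) (th0 : Theta)
  {dO} {Omega : measurableType dO} (Y : nat -> Omega -> X) (T : nat)
  (w : Omega) : \bar R :=
  Order.max (bcs_tau CS th0 Y w - (T%:R)%:E)%E 0%E.

End Defs.

(* Main.v *)
Require Import Defs.
From HB Require Import structures.
From mathcomp Require Import all_boot all_order all_algebra.
From mathcomp Require Import all_classical all_reals all_analysis.
Import Order.TTheory GRing.Theory Num.Theory.
Import numFieldNormedType.Exports.
Local Open Scope classical_set_scope.
Local Open Scope ring_scope.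

Section Indep.
Local Open Scope ereal_scope.
Context {R : realType} {dO : measure_display} {Omega : measurableType dO}
  (P : probability Omega R).

Lemma indep_ext1 (G : set (set Omega)) (C : set Omega) :
  G `<=` measurable -> G setT -> setI_closed G -> measurable C ->
  (forall B, G B -> P (B `&` C) = P B * P C) ->
  forall B, <<s G >> B -> P (B `&` C) = P B * P C.
Proof.
move=> Gm GT GI mC h.
have PC0 : (0 <= fine (P C))%R by apply: fine_ge0.
pose m1 := mrestr P mC.
pose m2 := mscale (NngNum PC0) P.
have Pfin : P C \is a fin_num by rewrite fin_num_measure.
have e2 : forall B, m2 B = P B * P C.
  by move=> B; rewrite /m2 /mscale /= fineK // muleC.
move=> B GB.
have := @g_sigma_algebra_measure_unique _ R Omega G Gm (fun=> setT) (fun=> GT) _ m1 m2 GI.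
move=> H; rewrite -e2; apply: H => //.
- by apply/seteqP; split => // x _; exists 0%N.
- by move=> A GA; transitivity (P A * P C); [exact: h|exact/esym/e2].
- move=> k; rewrite /m1.
  rewrite [X in X < _](_ : _ = P C); last by rewrite /mrestr; congr (P _); apply/seteqP; split => x //= [].

  by apply: (le_lt_trans (probability_le1 P mC)); rewrite ltry.
Qed.

Lemma indep_ext (G1 G2 : set (set Omega)) :
  G1 `<=` measurable -> G1 setT -> setI_closed G1 ->
  G2 `<=` measurable -> G2 setT -> setI_closed G2 ->
  (forall B C, G1 B -> G2 C -> P (B `&` C) = P B * P C) ->
  forall B C, <<s G1 >> B -> <<s G2 >> C -> P (B `&` C) = P B * P C.
Proof.
move=> G1m G1T G1I G2m G2T G2I h B C sB sC.
have s1m := smallest_sub (@sigma_algebra_measurable _ Omega) G1m.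
have s2m := smallest_sub (@sigma_algebra_measurable _ Omega) G2m.
have h1 : forall C', G2 C' -> P (B `&` C') = P B * P C'.
  move=> C' GC'; apply: (@indep_ext1 G1 C' G1m G1T G1I (G2m _ GC')) => //.
  by move=> B' GB'; apply: h.
have := @indep_ext1 G2 B G2m G2T G2I (s1m _ sB).
move=> H; rewrite setIC muleC; apply: H sC.
by move=> C' GC'; rewrite setIC muleC; apply: h1.
Qed.

End Indep.
Section Rect.
Local Open Scope ereal_scope.
Context {R : realType} {dO : measure_display} {Omega : measurableType dO}
  (P : probability Omega R) {dX : measure_display} {X : measurableType dX}
  (Xs : nat -> Omega -> X)
  (hXm : forall i, measurable_fun [set: Omega] (Xs i))
  (hXind : mutually_independent P Xs).

Definition rect (I : seq nat) : set (set Omega) :=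
  [set B | exists A : nat -> set X, (forall i, measurable (A i)) /\
     B = \bigcap_(i in [set` I]) (Xs i @^-1` A i)].

Lemma preim_meas k (A : set X) : measurable A -> measurable (Xs k @^-1` A).
Proof. by move=> mA; rewrite -[X in measurable X]setTI; exact: hXm. Qed.

Lemma rect_meas I : rect I `<=` measurable.
Proof.
move=> B [A [mA ->]]; apply: bigcap_measurableType => k _.
exact: preim_meas.
Qed.

Lemma rect_T I : rect I setT.
Proof.
exists (fun=> setT); split => //.
by apply/seteqP; split => x // _ i _.
Qed.

Lemma rect_I I : setI_closed (rect I).
Proof.
move=> B C [A [mA ->]] [A' [mA' ->]].
exists (fun i => A i `&` A' i); split; first by move=> i; exact: measurableI.
apply/seteqP; split => x.
  by move=> [h1 h2] i Ii; split; [exact: h1|exact: h2].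
by move=> h; split => i Ii; have [] := h i Ii.
Qed.

Lemma rect_sub I J : {subset I <= J} -> rect I `<=` rect J.
Proof.
move=> IJ B [A [mA ->]].
exists (fun k => if k \in I then A k else setT); split.
  by move=> k; case: ifP.
apply/seteqP; split => x.
  move=> h k Jk /=; case: ifP => // kI; exact: h.
move=> h k /= Ik; have := h k (IJ _ Ik); by rewrite /= Ik.
Qed.

Lemma rect_single I k (A : set X) : k \in I -> measurable A ->
  rect I (Xs k @^-1` A).
Proof.
move=> kI mA; exists (fun i => if i == k then A else setT); split.
  by move=> i; case: ifP.
apply/seteqP; split => x.
  move=> h i Ii /=; case: ifP => // /eqP -> //.
move=> h; have := h k kI; by rewrite /= eqxx.
Qed.

Lemma indep_rect I J B C : uniq I -> uniq J ->
  (forall i, i \in I -> i \notin J) ->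
  rect I B -> rect J C -> P (B `&` C) = P B * P C.
Proof.
move=> uI uJ dIJ [A [mA ->]] [A' [mA' ->]].
pose A'' k := if k \in I then A k else A' k.
have mA'' : forall k, measurable (A'' k) by move=> k; rewrite /A''; case: ifP.
have uIJ : uniq (I ++ J).
  rewrite cat_uniq uI uJ /= andbT; apply/hasPn => j jJ; apply/negP => jI.
  by have := dIJ _ jI; rewrite jJ.
have hE : (\bigcap_(i in [set` I]) (Xs i @^-1` A i)) `&`
         (\bigcap_(i in [set` J]) (Xs i @^-1` A' i)) =
         \bigcap_(i in [set` I ++ J]) (Xs i @^-1` A'' i).
  apply/seteqP; split => x.
    move=> [h1 h2] i /=; rewrite mem_cat => /orP[iI|iJ]; rewrite /A''.
      by rewrite iI; exact: h1.
    case: ifP => iI; last exact: h2.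
    by have := dIJ _ iI; rewrite iJ.
  move=> h; split => i /= iI.
    by have := h i; rewrite /= mem_cat iI /A'' iI; apply.
  have := h i; rewrite /= mem_cat iI orbT /A''; case: ifP => iI'; first last.
    by apply.

  by have := dIJ _ iI'; rewrite iI.
rewrite hE (hXind (I ++ J) uIJ A'' mA'') (hXind I uI A mA) (hXind J uJ A' mA') big_cat /=.
congr (_ * _); apply: eq_big_seq => i iI; rewrite /A'' ?iI //.
by case: ifP => // iI'; have := dIJ _ iI'; rewrite iI.
Qed.

End Rect.
Lemma le_integral_nm {R : realType} {dO : measure_display} {Omega : measurableType dO}
  (P : {measure set Omega -> \bar R}) (f g : Omega -> \bar R) :
  (forall x, (0 <= f x)%E) -> (forall x, (f x <= g x)%E) ->
  (\int[P]_x f x <= \int[P]_x g x)%E.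
Proof.
move=> f0 fg.
have g0 : forall x, (0 <= g x)%E by move=> x; exact: le_trans (f0 x) (fg x).
rewrite !ge0_integralTE //.
apply: le_ereal_sup => _ [h hf <-]; exists h => //= x.
exact: le_trans (hf x) (fg x).
Qed.

Lemma tuple_preim_sigma {dO : measure_display} {Omega : measurableType dO}
  (G : set (set Omega)) {dX : measure_display} {X : measurableType dX} n
  (F : Omega -> n.-tuple X) (S : set (n.-tuple X)) :
  (forall i : 'I_n, forall A, measurable A -> G ((fun w => tnth (F w) i) @^-1` A)) ->
  measurable S -> <<s G >> (F @^-1` S).
Proof.
move=> hG mS.
have mF : measurable_fun [set: g_sigma_algebraType G]
   (F : g_sigma_algebraType G -> n.-tuple X).
  apply/measurable_fun_tnthP => i _ A mA; rewrite setTI.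
  by apply: sub_sigma_algebra; exact: hG.
by have := mF measurableT _ mS; rewrite setTI.
Qed.

From mathcomp Require Import zify ring lra.
From mathcomp Require Import measurable_realfun.

Lemma nneseries_le_bound {R : realType} (u : nat -> \bar R) (x : \bar R) :
  (forall n, (0 <= u n)%E) -> (forall n, (\sum_(0 <= k < n) u k <= x)%E) ->
  (\sum_(k <oo) u k <= x)%E.
Proof.
move=> u0 hx.
have u0' : forall n, (0 <= n)%N -> true -> (0 <= u n)%E by move=> n _ _; exact: u0.
move: (u0') => /ereal_nondecreasing_series/ereal_nondecreasing_cvgn/cvg_lim -> //.
by apply: ge_ereal_sup => _ [n _ <-] /=; exact: hx.
Qed.

Section Main.
Local Open Scope ereal_scope.
Context (R : realType) (Theta : Type) (d : Theta -> Theta -> R)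
  (dX : measure_display) (X : measurableType dX)
  (Pth : Theta -> probability X R)
  (alpha : R) (halpha0 : (0 < alpha)%R) (halpha1 : (alpha < 1)%R)
  (CS : seq X -> set Theta)
  (hCSm : CS_measurable d CS) (hCSn : CS_nested CS)
  (wd : nat -> Theta -> R -> R) (hw : pointwise_width d Pth CS wd alpha)
  (th0 th1 : Theta) (T : nat)
  (dO : measure_display) (Omega : measurableType dO) (P : probability Omega R)
  (Xs : nat -> Omega -> X)
  (hXm : forall i, measurable_fun [set: Omega] (Xs i))
  (hXind : mutually_independent P Xs)
  (hpost : forall i A, (T <= i)%N -> measurable A -> P (Xs i @^-1` A) = Pth th1 A)
  (t : nat) (ht1 : (1 <= t)%N) (htw : (wd t th1 alpha < d th1 th0)%R).

Definition fidx m i := if (i < t)%N then ((m + t).-1 - i)%N else (m + t + i)%N.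
Definition gidx m k := if (k < m + t)%N then ((m + t).-1 - k)%N else (k - (m + t))%N.

Lemma fidxK m : cancel (fidx m) (gidx m).
Proof.
move=> i; rewrite /fidx /gidx; have [it|it] := ltnP i t.
  by rewrite ifT; lia.
by rewrite ifF; lia.
Qed.

Lemma fidx_ge m i : (m <= fidx m i)%N.
Proof. rewrite /fidx; have [it|it] := ltnP i t; lia. Qed.

Lemma indep_comp (f g : nat -> nat) : cancel f g ->
  mutually_independent P (fun i => Xs (f i)).
Proof.
move=> fK I uI A mA.
have uI' : uniq (map f I) by rewrite map_inj_uniq //; exact: can_inj fK.
have := hXind (map f I) uI' (fun k => A (g k)) (fun k => mA (g k)).
rewrite big_map; under eq_bigr do rewrite fK.
move=> <-; congr (P _); apply/seteqP; split => x /= h.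
  by move=> k /= /mapP [i iI ->]; rewrite /= fK; exact: h.
by move=> i /= iI; have := h (f i); rewrite /= fK; apply; exact: map_f.
Qed.

Definition Yb m i := Xs (fidx m i).

Lemma iid_Yb m : (T <= m)%N -> iid_with_law P (Yb m) (Pth th1).
Proof.
move=> Tm; split.
- by move=> i; exact: hXm.
- exact: indep_comp (fidxK m).
- move=> i A mA; apply: hpost => //; exact: leq_trans Tm (fidx_ge m i).
Qed.

Definition Gm m := [set w | forall th', CS (obs_prefix (Yb m) t w) th' ->
  (d th1 th' <= wd t th1 alpha)%R].

Lemma PGm m : (T <= m)%N -> (1 - alpha)%:E <= P (Gm m).
Proof. move=> Tm; exact: (hw th1 t ht1 _ _ P (Yb m) (iid_Yb m Tm)). Qed.

Lemma size_obs (Y : nat -> Omega -> X) n w : size (obs_prefix Y n w) == n.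
Proof. by rewrite /obs_prefix size_map size_iota. Qed.

Definition Fb m (w : Omega) : t.-tuple X := Tuple (size_obs (Yb m) t w).

Lemma Gm_sigma m : <<s rect Xs (iota m t) >> (Gm m).
Proof.
have -> : Gm m = Fb m @^-1` [set x : t.-tuple X | forall th', CS (tval x) th' ->
  (d th1 th' <= wd t th1 alpha)%R] by [].
apply: tuple_preim_sigma; last exact: (hCSm t th1).2.
move=> i A mA.
have -> : (fun w => tnth (Fb m w) i) = Xs (fidx m i).
  apply/funext => w; rewrite (tnth_nth (Xs 0 w)) /= /obs_prefix.
  by rewrite (nth_map 0%N) ?size_iota // nth_iota.
have hi := ltn_ord i; apply: rect_single => //; rewrite mem_iota /fidx ifT //; apply/andP; split; lia.
Qed.

Lemma rev_obs m w : rev (obs_prefix Xs (m + t) w) =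
  obs_prefix (Yb m) t w ++ rev (obs_prefix Xs m w).
Proof.
rewrite /obs_prefix iotaD map_cat rev_cat add0n; congr (_ ++ _).
rewrite -map_rev /Yb.
have -> : rev (iota m t) = map (fidx m) (iota 0 t).
  apply: (@eq_from_nth _ 0%N); first by rewrite size_rev size_map !size_iota.
  move=> i; rewrite size_rev size_iota => it.
  rewrite nth_rev ?size_iota // (nth_map 0%N) ?size_iota // !nth_iota //; last lia.
  rewrite /fidx ifT; lia.
by rewrite -map_comp.
Qed.

Lemma detect m w : Gm m w ->
  [set th0] `&` CS (rev (obs_prefix Xs (m + t) w)) = set0.
Proof.
move=> hG; apply/seteqP; split => // th [/= -> hth].
rewrite rev_obs in hth; have := hG _ (hCSn _ _ _ hth).
by rewrite leNgt htw.
Qed.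

Lemma delay_le m w : (T <= m)%N -> Gm m w ->
  delay (R:=R) CS th0 Xs T w <= (((m + t - T)%N%:R : R))%:E.
Proof.
move=> Tm hG; rewrite /delay ge_max lee_fin ler0n andbT.
have : bcs_tau (R:=R) CS th0 Xs w <= (((m + t)%N%:R : R))%:E.
  apply: ereal_inf_lbound; exists (m + t)%N => //; split; first lia.
  exact: detect.
move=> h; rewrite natrB; last lia.
rewrite EFinB; exact: leeB.
Qed.

Fixpoint Hk k : set Omega :=
  if k is k'.+1 then Hk k' `&` ~` Gm (T + k' * t) else setT.

Lemma sig_meas I : <<s rect Xs I >> `<=` measurable.
Proof.
exact: smallest_sub (@sigma_algebra_measurable _ Omega) (@rect_meas _ _ _ _ Xs hXm I).
Qed.

Lemma sig_mono I J : {subset I <= J} -> <<s rect Xs I >> `<=` <<s rect Xs J >>.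
Proof. by move=> IJ; apply: sub_sigma_algebra2; exact: rect_sub. Qed.

Lemma Hk_sigma k : <<s rect Xs (iota 0 (T + k * t)) >> (Hk k).
Proof.
elim: k => [|k IH] /=.
  by apply: sub_sigma_algebra; exact: rect_T.
pose G' := rect Xs (iota 0 (T + k.+1 * t)).
have h1 : <<s G' >> (Hk k).
  apply: (sig_mono _ _ _ _ IH) => i; rewrite !mem_iota mulSn; lia.
have h2 : <<s G' >> (Gm (T + k * t)).
  apply: (sig_mono _ _ _ _ (Gm_sigma _)) => i; rewrite !mem_iota mulSn; lia.
have : measurable (Hk k `&` ~` Gm (T + k * t) : set (g_sigma_algebraType G')).
  by apply: measurableI => //; apply: measurableC.
by [].
Qed.

Lemma PnotG m : (T <= m)%N -> P (~` Gm m) <= alpha%:E.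
Proof.
move=> Tm; have mG : measurable (Gm m) by apply: sig_meas; exact: Gm_sigma.
rewrite probability_setC //.
have hG := PGm m Tm.
have Gfin : P (Gm m) \is a fin_num by rewrite fin_num_measure.
rewrite -(fineK Gfin) in hG *; rewrite lee_fin in hG.
by rewrite -EFinB lee_fin; lra.
Qed.

Lemma PHk k : P (Hk k) <= (alpha ^+ k)%:E.
Proof.
elim: k => [|k IH] /=; first by rewrite probability_setT expr0.
rewrite (@indep_ext _ _ _ P (rect Xs (iota 0 (T + k * t))) (rect Xs (iota (T + k * t) t))).
- rewrite exprSr EFinM; apply: lee_pmul => //.
  by apply: PnotG; lia.
- exact: rect_meas.
- exact: rect_T.
- exact: rect_I.
- exact: rect_meas.
- exact: rect_T.
- exact: rect_I.
- move=> B C hB hC; apply: (@indep_rect _ _ _ P _ _ Xs hXind _ _ _ _ _ _ _ hB hC); rewrite ?iota_uniq //.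
  by move=> i; rewrite !mem_iota => hi; apply/negP => /andP[h _]; lia.
- exact: Hk_sigma.
- apply: sigma_algebraC; exact: Gm_sigma.
Qed.

Lemma series_ge_const (u : nat -> \bar R) (c : R) n : (forall k, 0 <= u k) ->
  (forall k, (k < n)%N -> u k = c%:E) -> (c *+ n)%:E <= \sum_(k <oo) u k.
Proof.
move=> u0 hu; apply: le_trans (nneseries_lim_ge n _); last by move=> *; exact: u0.
rewrite (@eq_big_nat _ _ _ 0 n _ (fun=> c%:E)); last by move=> k /andP[_ kn]; exact: hu.
by rewrite sumEFin sumr_const_nat subn0.
Qed.

Definition ser w := \sum_(k <oo) (((t%:R : R) * \1_(Hk k) w)%R)%:E.

Lemma ser_ge0 k w : 0 <= (((t%:R : R) * \1_(Hk k) w)%R)%:E.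
Proof. by rewrite lee_fin mulr_ge0. Qed.

Lemma delay_ser w : delay (R:=R) CS th0 Xs T w <= ser w.
Proof.
have [[j hj]|nod] := pselect (exists j, Gm (T + j * t) w).
  have exP : exists j, `[< Gm (T + j * t) w >] by exists j; exact/asboolP.
  case: (ex_minnP exP) => j0 /asboolP hj0 hmin.
  have hH : forall k, (k <= j0)%N -> Hk k w.
    elim => [|k IH] hk //=; split; first by apply: IH; lia.
    move=> hG; have := hmin k (asboolT hG); lia.
  have hd := delay_le (T + j0 * t) w (leq_addr _ _) hj0.
  apply: le_trans hd _.
  have -> : (T + j0 * t + t - T)%N = (j0.+1 * t)%N by lia.
  rewrite (GRing.natrM R) mulrC mulr_natr.
  apply: series_ge_const; first by move=> k; exact: ser_ge0.
  by move=> k hk; rewrite indicE mem_set ?mulr1 //; apply: hH; lia.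
have hH : forall k, Hk k w.
  elim => [|k IH] //=; split => // hG; apply: nod; by exists k.
suff -> : ser w = +oo by rewrite leey.
have hge : forall n, ((t%:R : R) *+ n)%:E <= ser w.
  move=> n; apply: series_ge_const; first by move=> k; exact: ser_ge0.
  by move=> k _; rewrite indicE mem_set ?mulr1.
have s0 : 0 <= ser w by apply: nneseries_ge0 => k _ _; exact: ser_ge0.
move: hge s0; case: (ser w) => // r hge _.
have := hge (Num.truncn r).+1; rewrite lee_fin => h.
have := truncnS_gt r.
have : ((Num.truncn r).+1%:R <= (t%:R : R) *+ (Num.truncn r).+1)%R.
  by rewrite -[X in (_ <= X)%R]mulr_natl -natrM ler_nat leq_pmulr.
move=> h2 h3; have := lt_le_trans h3 (le_trans h2 h); by rewrite ltxx.
Qed.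

Lemma mHk k : measurable (Hk k).
Proof. exact: sig_meas (Hk_sigma k). Qed.

Lemma int_ser : \int[P]_w ser w <= (((t%:R : R) / (1 - alpha))%R)%:E.
Proof.
rewrite /ser integral_nneseries //; last first.
  move=> k; apply/measurable_realfun.measurable_EFinP; apply: measurable_funM.
    exact: measurable_cst.
  exact: measurable_indic (mHk k).
apply: (@le_trans _ _ (\sum_(k <oo) (((t%:R : R) * alpha ^+ k)%R)%:E)).
  apply: lee_nneseries => [k _ _|k _].
    by apply: integral_ge0 => x _; exact: ser_ge0.
  rewrite (integralZl_indic _ (fun=> Hk k)); first last.
  - exact: mHk.
  - by move=> h; exfalso; move: h; rewrite ltNge ler0n.
    exact: measurableT.
  rewrite integral_indic ?mHk //.
  apply: (@le_trans _ _ ((t%:R : R)%:E * P (Hk k))).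
    by rewrite le_eqVlt; apply/orP; left; apply/eqP; congr (_ * P _); apply/seteqP; split => x // [].
  have -> : ((t%:R : R) * alpha ^+ k)%:E = (t%:R : R)%:E * (alpha ^+ k)%:E by [].
  apply: lee_wpmul2l; first by rewrite lee_fin ler0n.
  exact: PHk.
  exact: mHk.
apply: nneseries_le_bound.
  by move=> n; rewrite lee_fin mulr_ge0 // exprn_ge0 // ltW.
move=> n; rewrite sumEFin lee_fin.
have := @geometric_le_lim R n (t%:R) alpha (ler0n _ _) halpha0.
rewrite gtr0_norm // => /(_ halpha1); apply: le_trans.
by rewrite /series /= le_eqVlt; apply/orP; left; apply/eqP; apply: eq_bigr.
Qed.

End Main.

Theorem corollary1 (R : realType)
  (Theta : Type) (d : Theta -> Theta -> R) (hd : is_metric d)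
  (dX : measure_display) (X : measurableType dX)
  (Pth : Theta -> probability X R)
  (alpha : R) (halpha0 : 0 < alpha) (halpha1 : alpha < 1)
  (CS : seq X -> set Theta)
  (hCSm : CS_measurable d CS) (hCSn : CS_nested CS)
  (hCSl : CS_level Pth CS alpha)
  (wd : nat -> Theta -> R -> R) (hw : pointwise_width d Pth CS wd alpha)
  (th0 th1 : Theta) (hneq : th0 <> th1) (T : nat)
  (dO : measure_display) (Omega : measurableType dO) (P : probability Omega R)
  (Xs : nat -> Omega -> X)
  (hXm : forall i, measurable_fun [set: Omega] (Xs i))
  (hXind : mutually_independent P Xs)
  (hpre : forall i A, (i < T)%N -> measurable A -> P (Xs i @^-1` A) = Pth th0 A)
  (hpost : forall i A, (T <= i)%N -> measurable A -> P (Xs i @^-1` A) = Pth th1 A) :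
  (\int[P]_w delay CS th0 Xs T w <=
     ((3 / (1 - alpha))%:E * t0 d wd alpha th0 th1))%E.
Proof.
have ha : (0 < 1 - alpha)%R by rewrite subr_gt0.
have [[t1 ht]|none] := pselect (exists t, (1 <= t)%N && (wd t th1 alpha < d th1 th0)).
  have exP : exists t, (1 <= t)%N && (wd t th1 alpha < d th1 th0) by exists t1.
  case: (ex_minnP exP) => t /andP[ht1 htw] hmin.
  have t0E : t0 d wd alpha th0 th1 = ((t%:R : R))%:E.
    rewrite /t0; apply/eqP; rewrite eq_le; apply/andP; split.
      by apply: ereal_inf_lbound; exists t.
    apply/ereal_infP => _ [s [hs1 hs2] <-]; rewrite lee_fin ler_nat.
    by apply: hmin; rewrite hs1 hs2.
  rewrite t0E.
  have f0 : forall w, (0 <= delay (R:=R) CS th0 Xs T w)%E.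
    by move=> w; rewrite /delay le_max lexx orbT.
  apply: le_trans (le_integral_nm P _ _ f0
    (@delay_ser R Theta d dX X alpha halpha0 halpha1 CS hCSn wd th0 th1 T dO Omega Xs t ht1 htw)) _.
  apply: le_trans (@int_ser R Theta d dX X Pth alpha halpha0 halpha1 CS hCSm wd hw th0 th1 T dO Omega P Xs hXm hXind hpost t ht1 htw) _.
  rewrite -EFinM lee_fin mulrC ler_pM2r ?ltr0n //.
  by rewrite ler_pMl ?invr_gt0 // ler1n.
have -> : t0 d wd alpha th0 th1 = +oo%E.
  apply/eqP; rewrite eq_le leey /=; apply/ereal_infP => y [s [hs1 hs2] _].
  by exfalso; apply: none; exists s; rewrite hs1 hs2.
rewrite muleC gt0_mulye ?leey // lte_fin divr_gt0 //.
Qed.
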